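(* Let $n,N\ge 1$ and $\varepsilon\ge 0$ be integers with $\varepsilon/n\le 1/2$ and $N<2^{n(1-h(\varepsilon/n))-1}$. Let $p=1-(1-V_\varepsilon)^N$ be the success probability of a single trial of the attacker, and let $m_{out}=-\ln 2/\ln(1-p)$ be the median number of trials for the attacker to successfully impersonate a user. Then $$m_{out}=\Omega\left(2^{n(1-h(\varepsilon/n))-\log_2 N}\right)\quad\text{and}\quad m_{out}=O\left(2^{n(1-h(\varepsilon/n))+\frac{1}{2}\log_2\left(\varepsilon\left(1-\frac{\varepsilon}{n}\right)\right)-\log_2 N}\right),$$ where $h$ is the binary entropy function.
   Context: Templates are binary vectors in $\mathbb{Z}_2^n$ compared with the Hamming distance $d_{\mathcal H}$; a guess $t$ is accepted against an enrolled template $v$ if $d_{\mathcal H}(t,v)\le\varepsilon$. The $N$ enrolled templates are independent and uniformly distributed in $\mathbb{Z}_2^n$, and the (outsider) attacker generates independent uniformly random templates until one is within distance $\varepsilon$ of some enrolled template. $B_\varepsilon(t)=\{y\in\mathbb{Z}_2^n: d_{\mathcal H}(t,y)\le\varepsilon\}$, $|B_\varepsilon|=\sum_{k=0}^{\varepsilon}\binom{n}{k}$, and $V_\varepsilon=|B_\varepsilon|/2^n$. The binary entropy function is $h(x)=-x\log_2 x-(1-x)\log_2(1-x)$. *)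

(* Defs.v *)
From Stdlib Require Import Reals.
Open Scope R_scope.

Definition log2 (x : R) : R := ln x / ln 2.

(* binary entropy h(x) = -x log2 x - (1-x) log2 (1-x); at x = 0 or 1 the
   terms 0*log2 0 evaluate to 0 (since Stdlib's ln 0 = 0), matching the
   usual convention 0 log 0 = 0. *)
Definition h (x : R) : R := - x * log2 x - (1 - x) * log2 (1 - x).

Definition ball_card (n e : nat) : R := sum_f_R0 (fun k => Binomial.C n k) e.

Definition V (n e : nat) : R := ball_card n e / 2 ^ n.

Definition p_succ (n N e : nat) : R := 1 - (1 - V n e) ^ N.

Definition m_out (n N e : nat) : R := - ln 2 / ln (1 - p_succ n N e).

Definition expo (n e : nat) : R := INR n * (1 - h (INR e / INR n)).

(* Main.v *)
Require Import Defs.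
From Coquelicot Require Import Coquelicot.
From Stdlib Require Import Reals Lra Lia Psatz Factorial.
Open Scope R_scope.

Lemma nonneg_from_deriv (f df : R -> R) (y : R) :
  0 <= y -> f 0 = 0 ->
  (forall t, 0 <= t -> is_derive f t (df t)) ->
  (forall t, 0 <= t -> 0 <= df t) -> 0 <= f y.
Proof.
  intros Hy H0 Hd Hdf.
  destruct (MVT_gen f 0 y df) as [c [Hc Heq]].
  - intros x Hx. apply Hd. rewrite Rmin_left in Hx by lra. lra.
  - intros x Hx. rewrite Rmin_left in Hx by lra. rewrite Rmax_right in Hx by lra.
    apply derivable_continuous_pt. exists (df x). apply is_derive_Reals, Hd. lra.
  - rewrite Rmin_left in Hc by lra. rewrite Rmax_right in Hc by lra.
    assert (0 <= df c * (y - 0)) by (apply Rmult_le_pos; [apply Hdf; lra| lra]).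
    lra.
Qed.

Lemma L1 (y : R) : 0 <= y -> 2 * y / (2 + y) <= ln (1 + y).
Proof.
  intros Hy.
  assert (0 <= ln (1 + y) - 2 * y / (2 + y)); [|lra].
  apply (nonneg_from_deriv (fun t => ln (1 + t) - 2 * t / (2 + t))
           (fun t => t ^ 2 / ((1 + t) * (2 + t) ^ 2))); auto.
  - repeat rewrite Rplus_0_r; rewrite ln_1. field.
  - intros t Ht. auto_derive.
    + repeat split; lra.
    + field. lra.
  - intros t Ht. apply Rmult_le_pos. nra. apply Rlt_le, Rinv_0_lt_compat.
    apply Rmult_lt_0_compat; nra.
Qed.

Lemma L2 (y : R) : 0 <= y -> ln (1 + y) <= y * (6 + y) / (6 + 4 * y).
Proof.
  intros Hy.
  assert (0 <= y * (6 + y) / (6 + 4 * y) - ln (1 + y)); [|lra].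
  apply (nonneg_from_deriv (fun t => t * (6 + t) / (6 + 4 * t) - ln (1 + t))
           (fun t => 4 * t ^ 3 / ((1 + t) * (6 + 4 * t) ^ 2))); auto.
  - repeat rewrite Rplus_0_r; rewrite ln_1. unfold Rdiv. ring.
  - intros t Ht. auto_derive.
    + repeat split; lra.
    + field. lra.
  - intros t Ht. apply Rmult_le_pos. nra. apply Rlt_le, Rinv_0_lt_compat.
    apply Rmult_lt_0_compat; nra.
Qed.

Lemma ln_div' (x y : R) : 0 < x -> 0 < y -> ln (x / y) = ln x - ln y.
Proof. intros. unfold Rdiv. rewrite ln_mult, ln_Rinv; try apply Rinv_0_lt_compat; auto. Qed.

Lemma exp_le' (x y : R) : x <= y -> exp x <= exp y.
Proof. intros [H|H]. left; apply exp_increasing; auto. subst; lra. Qed.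

Lemma ln_sqrt' (x : R) : 0 < x -> ln (sqrt x) = / 2 * ln x.
Proof. intros. rewrite <- Rpower_sqrt by auto. apply ln_Rpower. Qed.

Definition lu (j : nat) : R :=
  ln (INR (fact j)) + INR j - INR j * ln (INR j) - / 2 * ln (INR j).

Lemma lu_step (j : nat) : (1 <= j)%nat ->
  lu (S j) - lu j = 1 - (INR j + / 2) * ln (1 + / INR j).
Proof.
  intros Hj.
  assert (Hj0 : 0 < INR j) by (apply lt_0_INR; lia).
  assert (Hf : 0 < INR (fact j)) by apply INR_fact_lt_0.
  assert (E : ln (1 + / INR j) = ln (INR (S j)) - ln (INR j)).
  { rewrite <- ln_div' by (try apply lt_0_INR; lia).
    f_equal. rewrite S_INR. field. lra. }
  rewrite E. unfold lu. rewrite fact_simpl, mult_INR, ln_mult; [|apply lt_0_INR; lia|exact Hf].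
  rewrite S_INR. ring.
Qed.

Lemma step_lo (j : nat) : (1 <= j)%nat -> 1 <= (INR j + / 2) * ln (1 + / INR j).
Proof.
  intros Hj. assert (Hj0 : 1 <= INR j) by (apply (le_INR 1); lia).
  assert (Hy : 0 <= / INR j) by (apply Rlt_le, Rinv_0_lt_compat; lra).
  pose proof (L1 _ Hy) as H.
  apply Rle_trans with ((INR j + / 2) * (2 * / INR j / (2 + / INR j))).
  - right. field. split; lra.
  - apply Rmult_le_compat_l; lra.
Qed.

Lemma step_hi (j : nat) : (1 <= j)%nat ->
  (INR j + / 2) * ln (1 + / INR j) <= 1 + / (8 * INR j) - / (8 * INR (S j)).
Proof.
  intros Hj. assert (Hj0 : 1 <= INR j) by (apply (le_INR 1); lia).
  assert (Hy : 0 <= / INR j) by (apply Rlt_le, Rinv_0_lt_compat; lra).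
  pose proof (L2 _ Hy) as H.
  apply Rle_trans with ((INR j + / 2) * (/ INR j * (6 + / INR j) / (6 + 4 * / INR j))).
  - apply Rmult_le_compat_l; lra.
  - rewrite S_INR.
    replace ((INR j + / 2) * (/ INR j * (6 + / INR j) / (6 + 4 * / INR j)))
      with (1 + / (12 * INR j * INR j + 8 * INR j)) by (field; repeat split; nra).
    replace (1 + / (8 * INR j) - / (8 * (INR j + 1)))
      with (1 + / (8 * INR j * INR j + 8 * INR j)) by (field; repeat split; nra).
    apply Rplus_le_compat_l. apply Rinv_le_contravar; nra.
Qed.

Lemma lu_1 : lu 1 = 1.
Proof. unfold lu. simpl. rewrite ln_1. ring. Qed.

Lemma lu_upper (j : nat) : (1 <= j)%nat -> lu j <= 1.
Proof.
  induction j as [|j IH]; intros Hj; [lia|].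
  destruct (Nat.eq_dec j 0) as [->|Hj1]; [rewrite lu_1; lra|].
  pose proof (lu_step j ltac:(lia)). pose proof (step_lo j ltac:(lia)).
  specialize (IH ltac:(lia)). lra.
Qed.

Lemma lu_lower (j : nat) : (1 <= j)%nat -> 7 / 8 <= lu j - / (8 * INR j).
Proof.
  induction j as [|j IH]; intros Hj; [lia|].
  destruct (Nat.eq_dec j 0) as [->|Hj1]; [rewrite lu_1; simpl; lra|].
  pose proof (lu_step j ltac:(lia)). pose proof (step_hi j ltac:(lia)).
  specialize (IH ltac:(lia)). lra.
Qed.

Lemma lu_ge (j : nat) : (1 <= j)%nat -> 7 / 8 <= lu j.
Proof.
  intros Hj. pose proof (lu_lower j Hj).
  assert (0 < / (8 * INR j)).
  { apply Rinv_0_lt_compat. assert (1 <= INR j) by (apply (le_INR 1); lia). lra. }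
  lra.
Qed.

Lemma binom_lower (k m : nat) : (1 <= k)%nat -> (1 <= m)%nat ->
  exp (- (9 / 8)) <=
  Binomial.C (k + m) k * (INR k / INR (k + m)) ^ k * (INR m / INR (k + m)) ^ m
  * sqrt (INR k * INR m / INR (k + m)).
Proof.
  intros Hk Hm.
  assert (Hk0 : 0 < INR k) by (apply lt_0_INR; lia).
  assert (Hm0 : 0 < INR m) by (apply lt_0_INR; lia).
  assert (Hn0 : 0 < INR (k + m)) by (apply lt_0_INR; lia).
  assert (HC : Binomial.C (k + m) k = INR (fact (k + m)) / (INR (fact k) * INR (fact m))).
  { unfold Binomial.C. replace (k + m - k)%nat with m by lia. reflexivity. }
  pose proof (INR_fact_lt_0 k). pose proof (INR_fact_lt_0 m). pose proof (INR_fact_lt_0 (k+m)).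
  assert (Hpos : 0 < Binomial.C (k + m) k) by (rewrite HC; apply Rdiv_lt_0_compat; nra).
  assert (Hs : 0 < INR k * INR m / INR (k + m)) by (apply Rdiv_lt_0_compat; nra).
  set (P := Binomial.C (k + m) k * (INR k / INR (k + m)) ^ k * (INR m / INR (k + m)) ^ m
            * sqrt (INR k * INR m / INR (k + m))).
  assert (Ha : 0 < INR k / INR (k + m)) by (apply Rdiv_lt_0_compat; auto).
  assert (Hb : 0 < INR m / INR (k + m)) by (apply Rdiv_lt_0_compat; auto).
  pose proof (sqrt_lt_R0 _ Hs) as H2. pose proof (pow_lt _ k Ha) as H3.
  pose proof (pow_lt _ m Hb) as H4.
  assert (H5 : 0 < C (k + m) k * (INR k / INR (k + m)) ^ k) by (apply Rmult_lt_0_compat; auto).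
  assert (H6 : 0 < C (k + m) k * (INR k / INR (k + m)) ^ k * (INR m / INR (k + m)) ^ m)
    by (apply Rmult_lt_0_compat; auto).
  assert (HP : 0 < P) by (apply Rmult_lt_0_compat; auto).
  rewrite <- (exp_ln P HP). apply exp_le'.
  assert (E : ln P = lu (k + m) - lu k - lu m).
  { unfold P. rewrite (ln_mult _ _ H6 H2), (ln_mult _ _ H5 H4), (ln_mult _ _ Hpos H3).
    rewrite ln_sqrt' by auto. rewrite !ln_pow by auto.
    rewrite !ln_div' by auto. rewrite HC, ln_div' by nra. rewrite ln_mult by auto.
    rewrite ln_div' by nra. rewrite ln_mult by auto.
    unfold lu. rewrite plus_INR. ring. }
  rewrite E. pose proof (lu_ge (k + m) ltac:(lia)). pose proof (lu_upper k Hk).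
  pose proof (lu_upper m Hm). lra.
Qed.

Lemma C_nonneg (n i : nat) : 0 <= Binomial.C n i.
Proof.
  unfold Binomial.C. apply Rmult_le_pos. apply pos_INR.
  apply Rlt_le, Rinv_0_lt_compat, Rmult_lt_0_compat; apply INR_fact_lt_0.
Qed.

Lemma sum_partial_le (f : nat -> R) (e n : nat) :
  (forall i, 0 <= f i) -> (e <= n)%nat -> sum_f_R0 f e <= sum_f_R0 f n.
Proof.
  intros Hf. induction n as [|n IH]; intros Hen.
  - replace e with 0%nat by lia. lra.
  - destruct (Nat.eq_dec e (S n)) as [->|Hne]; [lra|].
    simpl. specialize (IH ltac:(lia)). specialize (Hf (S n)). lra.
Qed.

Lemma sum_ge_last (f : nat -> R) (e : nat) :
  (forall i, 0 <= f i) -> f e <= sum_f_R0 f e.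
Proof.
  intros Hf. destruct e; simpl; [lra|].
  pose proof (cond_pos_sum f e Hf). lra.
Qed.

Lemma ball_upper (n e : nat) (x : R) : (e <= n)%nat -> 0 <= x -> x <= 1 - x ->
  ball_card n e * (x ^ e * (1 - x) ^ (n - e)) <= 1.
Proof.
  intros Hen Hx Hx2.
  assert (H1 : sum_f_R0 (fun i => Binomial.C n i * x ^ i * (1 - x) ^ (n - i)) n = 1).
  { rewrite <- binomial. replace (x + (1 - x)) with 1 by ring; apply pow1. }
  apply Rle_trans with (sum_f_R0 (fun i => Binomial.C n i * x ^ i * (1 - x) ^ (n - i)) n);
    [|right; exact H1].
  unfold ball_card. rewrite Rmult_comm, scal_sum.
  apply Rle_trans with (sum_f_R0 (fun i => Binomial.C n i * x ^ i * (1 - x) ^ (n - i)) e).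
  - apply sum_Rle. intros i Hi.
    rewrite Rmult_assoc. apply Rmult_le_compat_l; [apply C_nonneg|].
    replace e with (i + (e - i))%nat by lia. replace (n - i)%nat with ((e - i) + (n - e))%nat by lia.
    replace (n - (i + (e - i)))%nat with (n - e)%nat by lia.
    rewrite !pow_add.
    assert (0 <= x ^ i) by (apply pow_le; lra).
    assert (0 <= (1 - x) ^ (n - e)) by (apply pow_le; lra).
    assert (x ^ (e - i) <= (1 - x) ^ (e - i)) by (apply pow_incr; lra).
    assert (0 <= x ^ (e - i)) by (apply pow_le; lra).
    rewrite !Rmult_assoc. apply Rmult_le_compat_l; auto.
    apply Rmult_le_compat_r; auto.
  - apply sum_partial_le; auto. intros i.
    apply Rmult_le_pos; [apply Rmult_le_pos; [apply C_nonneg|]|]; apply pow_le; lra.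
Qed.

Lemma ball_lower (n e : nat) : Binomial.C n e <= ball_card n e.
Proof. apply sum_ge_last. intros; apply C_nonneg. Qed.

Lemma ln2_pos : 0 < ln 2.
Proof. pose proof ln_lt_2. lra. Qed.

Lemma Rpow2_log2 (x : R) : 0 < x -> Rpower 2 (log2 x) = x.
Proof.
  intros Hx. unfold Rpower, log2. pose proof ln2_pos.
  replace (ln x / ln 2 * ln 2) with (ln x) by (field; lra). apply exp_ln; auto.
Qed.

Lemma Rpow2_hlog2 (x : R) : 0 < x -> Rpower 2 (/ 2 * log2 x) = sqrt x.
Proof.
  intros Hx. rewrite <- Rpower_sqrt by auto. unfold Rpower, log2. pose proof ln2_pos.
  f_equal. field. lra.
Qed.

Lemma C_pos (n i : nat) : 0 < Binomial.C n i.
Proof.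
  unfold Binomial.C. apply Rmult_lt_0_compat. apply INR_fact_lt_0.
  apply Rinv_0_lt_compat, Rmult_lt_0_compat; apply INR_fact_lt_0.
Qed.

Lemma K_eq (n e : nat) : (1 <= n)%nat -> (e < n)%nat ->
  Rpower 2 (expo n e) =
  2 ^ n * ((INR e / INR n) ^ e * (1 - INR e / INR n) ^ (n - e)).
Proof.
  intros Hn Hen.
  assert (Hn0 : 0 < INR n) by (apply lt_0_INR; lia).
  assert (Hlt : INR e < INR n) by (apply lt_INR; lia).
  assert (He0 : 0 <= INR e) by apply pos_INR.
  set (x := INR e / INR n).
  assert (Hx0 : 0 <= x) by (unfold x; apply Rmult_le_pos; [lra|apply Rlt_le, Rinv_0_lt_compat; lra]).
  assert (Hx1 : 0 < 1 - x).
  { unfold x. apply Rlt_0_minus. apply (Rmult_lt_reg_r (INR n)); auto.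
    unfold Rdiv. rewrite Rmult_assoc, Rinv_l by lra. lra. }
  assert (Hpe : 0 < x ^ e /\ ln (x ^ e) = INR e * ln x).
  { destruct (Nat.eq_dec e 0) as [->|Hne].
    - simpl. rewrite ln_1. split; lra.
    - assert (0 < x).
      { unfold x. apply Rdiv_lt_0_compat; auto. apply lt_0_INR; lia. }
      split; [apply pow_lt; auto| apply ln_pow; auto]. }
  destruct Hpe as [Hpe Hle].
  assert (Hp2 : 0 < 2 ^ n) by (apply pow_lt; lra).
  assert (Hq : 0 < (1 - x) ^ (n - e)) by (apply pow_lt; auto).
  assert (HQ : 0 < 2 ^ n * (x ^ e * (1 - x) ^ (n - e))) by (apply Rmult_lt_0_compat; auto; apply Rmult_lt_0_compat; auto).
  rewrite <- (exp_ln _ HQ). unfold Rpower. f_equal.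
  rewrite ln_mult, ln_mult, Hle, !ln_pow; auto; try lra.
  rewrite minus_INR by lia.
  unfold expo, h, log2. fold x. pose proof ln2_pos.
  assert (INR e = INR n * x) by (unfold x; field; lra).
  rewrite H0. field. lra.
  apply Rmult_lt_0_compat; auto.
Qed.

Theorem theorem4p1 :
  exists c1 c2 : R, 0 < c1 /\ 0 < c2 /\
  forall n N e : nat,
    (1 <= n)%nat -> (1 <= N)%nat ->
    INR e / INR n <= 1 / 2 ->
    INR N < Rpower 2 (expo n e - 1) ->
    c1 * Rpower 2 (expo n e - log2 (INR N)) <= m_out n N e /\
    ((1 <= e)%nat ->
     m_out n N e <=
       c2 * Rpower 2 (expo n e
                      + / 2 * log2 (INR e * (1 - INR e / INR n))
                      - log2 (INR N))).
Proof.
  pose proof ln2_pos as Hl2.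
  exists (ln 2 / 2), (ln 2 * exp (9 / 8)).
  split; [lra|]. split; [apply Rmult_lt_0_compat; auto; apply exp_pos|].
  intros n N e Hn HN Hx HNK.
  assert (Hn0 : 0 < INR n) by (apply lt_0_INR; lia).
  assert (HN1 : 1 <= INR N) by (apply (le_INR 1); lia).
  assert (He0 : 0 <= INR e) by apply pos_INR.
  assert (Hlt : INR e < INR n).
  { assert (INR e <= INR n / 2).
    { apply (Rmult_le_reg_r (/ INR n)). apply Rinv_0_lt_compat; auto.
      replace (INR n / 2 * / INR n) with (1 / 2) by (field; lra). exact Hx. }
    lra. }
  assert (Hen : (e < n)%nat) by (apply INR_lt; auto).
  set (x := INR e / INR n) in *.
  assert (Hx0 : 0 <= x) by (unfold x; apply Rmult_le_pos; [lra|apply Rlt_le, Rinv_0_lt_compat; lra]).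
  set (Q := x ^ e * (1 - x) ^ (n - e)).
  set (K := Rpower 2 (expo n e)) in *.
  assert (HKQ : K = 2 ^ n * Q) by (unfold K, Q, x; apply K_eq; auto).
  assert (HQ : 0 < Q).
  { assert (0 < K) by (unfold K, Rpower; apply exp_pos).
    assert (0 < 2 ^ n) by (apply pow_lt; lra). nra. }
  assert (HK0 : 0 < K) by (unfold K, Rpower; apply exp_pos).
  assert (HK2 : Rpower 2 (expo n e - 1) = K / 2).
  { unfold Rminus. rewrite Rpower_plus, Rpower_Ropp, Rpower_1 by lra. fold K. unfold Rdiv. ring. }
  rewrite HK2 in HNK.
  set (bc := ball_card n e).
  assert (Hbu : bc * Q <= 1) by (unfold bc, Q; apply ball_upper; lia || lra).
  assert (Hbl : Binomial.C n e <= bc) by apply ball_lower.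
  pose proof (C_pos n e) as HC.
  set (v := V n e).
  assert (Hp2 : 0 < 2 ^ n) by (apply pow_lt; lra).
  assert (Hv : v = bc / 2 ^ n) by reflexivity.
  assert (HvK : v * K = bc * Q) by (rewrite Hv, HKQ; field; lra).
  assert (Hv0 : 0 < v) by (rewrite Hv; apply Rdiv_lt_0_compat; lra).
  assert (HNv : INR N * v < 1 / 2).
  { assert (INR N * v < K / 2 * v) by (apply Rmult_lt_compat_r; auto). nra. }
  assert (Hv2 : v < 1 / 2) by nra.
  set (L := - ln (1 - v)).
  assert (HLlo : v <= L).
  { pose proof (exp_ineq1_le (ln (1 - v))). rewrite exp_ln in H by lra. unfold L. lra. }
  assert (HLhi : L <= v / (1 - v)).
  { pose proof (exp_ineq1_le (ln (/ (1 - v)))). rewrite exp_ln in H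
      by (apply Rinv_0_lt_compat; lra).
    rewrite ln_Rinv in H by lra. unfold L.
    replace (v / (1 - v)) with (/ (1 - v) - 1) by (field; lra). lra. }
  assert (HL0 : 0 < L) by lra.
  assert (Hm : m_out n N e = ln 2 / (INR N * L)).
  { unfold m_out, p_succ. fold v.
    replace (1 - (1 - (1 - v) ^ N)) with ((1 - v) ^ N) by ring.
    rewrite ln_pow by lra. assert (ln (1 - v) < 0) by (unfold L in HL0; lra).
    unfold L. field. split; lra. }
  rewrite Hm.
  assert (HNL : 0 < INR N * L) by nra.
  split.
  - unfold Rminus. rewrite Rpower_plus, Rpower_Ropp, Rpow2_log2 by lra. fold K.
    apply (Rmult_le_reg_r (INR N * L)); auto.
    replace (ln 2 / (INR N * L) * (INR N * L)) with (ln 2) by (field; lra).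
    replace (ln 2 / 2 * (K * / INR N) * (INR N * L)) with (ln 2 / 2 * (K * L)) by (field; lra).
    assert (K * L <= 2).
    { assert (K * L <= K * (v / (1 - v))) by (apply Rmult_le_compat_l; lra).
      assert (K * (v / (1 - v)) = (v * K) / (1 - v)) by (field; lra).
      assert (v * K / (1 - v) <= 2).
      { apply (Rmult_le_reg_r (1 - v)); [lra|].
        replace (v * K / (1 - v) * (1 - v)) with (v * K) by (field; lra). lra. }
      lra. }
    nra.
  - intros He1.
    set (S := INR e * (1 - x)).
    assert (Hx1 : x < 1) by (unfold x; apply (Rmult_lt_reg_r (INR n)); auto;
                               unfold Rdiv; rewrite Rmult_assoc, Rinv_l; lra).
    assert (HS : 0 < S) by (unfold S; apply Rmult_lt_0_compat; [apply lt_0_INR; lia|lra]).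
    unfold Rminus. rewrite !Rpower_plus, Rpower_Ropp, Rpow2_log2, Rpow2_hlog2 by lra. fold K.
    fold S.
    apply (Rmult_le_reg_r (INR N * L)); auto.
    replace (ln 2 / (INR N * L) * (INR N * L)) with (ln 2) by (field; lra).
    replace (ln 2 * exp (9 / 8) * (K * sqrt S * / INR N) * (INR N * L))
      with (ln 2 * (exp (9 / 8) * (K * L * sqrt S))) by (field; lra).
    rewrite <- (Rmult_1_r (ln 2)) at 1. apply Rmult_le_compat_l; [lra|].
    pose proof (binom_lower e (n - e) He1 ltac:(lia)) as HB.
    replace (e + (n - e))%nat with n in HB by lia.
    rewrite minus_INR in HB by lia.
    replace (INR e * (INR n - INR e) / INR n) with S in HB
      by (unfold S, x; field; lra).
    replace ((INR n - INR e) / INR n) with (1 - x) in HB by (unfold x; field; lra).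
    fold x in HB. fold Q in HB.
    assert (Hsq : 0 < sqrt S) by (apply sqrt_lt_R0; auto).
    assert (exp (-(9/8)) <= K * L * sqrt S).
    { apply Rle_trans with (Binomial.C n e * Q * sqrt S).
      - replace (Binomial.C n e * Q * sqrt S) with
          (Binomial.C n e * x ^ e * (1 - x) ^ (n - e) * sqrt S) by (unfold Q; ring).
        exact HB.
      - apply Rmult_le_compat_r; [lra|].
        apply Rle_trans with (bc * Q); [apply Rmult_le_compat_r; lra|].
        rewrite <- HvK. rewrite (Rmult_comm K L). apply Rmult_le_compat_r; lra. }
    assert (exp (9/8) * exp (-(9/8)) = 1) by (rewrite <- exp_plus; replace (9/8 + - (9/8)) with 0 by ring; apply exp_0).
    pose proof (exp_pos (9/8)). nra.
Qed.
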